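(* (1) Let $t,y_2,y_3,y_4,\dots$ be independent indeterminates and set $y_0=t$, $y_1=1$, and $y_{-i}=-y_i$ for all $i\ge1$ (so $y_{-1}=-1$). For integers $a\le b$ write $Q(a,b)=P(\tilde T_a\cup\dots\cup\tilde T_b)/(y_ay_{a+1}\cdots y_b)$. Then: (a) for every $j\ge0$, $\lim_{t\to0}Q(-j,j+1)=y_{j+2}$ (i.e. the graph $H_j=\tilde T_{-j}\cup\dots\cup\tilde T_{j+1}$, with an even number of tiles centered at $\tilde T_0\cup\tilde T_1$, corresponds to $y_{j+2}$); (b) for every $k\ge0$, $\lim_{t\to0}Q(1-k,1+k)=1$ (any graph with an odd number of tiles centered at $\tilde T_1$ corresponds to $1$). (2) Analogously, fix an integer $N$, let $s$ and $y_k$ ($k\le N-1$) be independent indeterminates, and set $y_N=1$, $y_{N+1}=s$, $y_{N+1+k}=-y_{N+1-k}$ for all $k\ge1$. Then for every $k\ge0$, $\lim_{s\to0}P(\tilde T_{N-k}\cup\dots\cup\tilde T_{N+k})/(y_{N-k}\cdots y_{N+k})=1$ (any graph with an odd number of tiles centered at $\tilde T_N$ corresponds to $1$).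
   Context: For $k\in\mathbb{Z}$, the tile $\tilde T_k$ is a square whose northern edge has weight $y_{k+1}$, southern edge weight $y_{k-1}$, and eastern and western edges weight $1$. For $a\le b$, $\tilde T_a\cup\dots\cup\tilde T_b$ denotes the ladder graph of the tiles $\tilde T_a,\dots,\tilde T_b$ in this order: vertices $u_0,\dots,u_m,v_0,\dots,v_m$ with $m=b-a+1$, edges $u_{k-1}u_k$ of weight $y_{a+k}$ (north edge of $\tilde T_{a+k-1}$), $v_{k-1}v_k$ of weight $y_{a+k-2}$ (south edge of $\tilde T_{a+k-1}$), for $1\le k\le m$, and $u_kv_k$ of weight $1$ for $0\le k\le m$. $P(G)=\sum_M\prod_{e\in M}w_e$ over perfect matchings $M$ of $G$. The limits are taken after substituting the given specializations; the variables $y_0$ (resp. $y_{N+1}$) are kept as the formal variable $t$ (resp. $s$) and sent to $0$ at the end. *)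

(* Defs.v *)
From HB Require Import structures.
From mathcomp Require Import all_boot all_order all_algebra.
From mathcomp Require Import all_classical all_reals all_analysis.
Set Implicit Arguments. Unset Strict Implicit. Unset Printing Implicit Defensive.
Import Order.TTheory GRing.Theory Num.Theory.
Local Open Scope ring_scope.

(* Ladder graph of the m tiles  T_a, T_(a+1), ..., T_(a+m-1)
   (so b = a + m - 1), with edge weights given by y : int -> R.
   Vertices: (true, k) = u_k, (false, k) = v_k, for 0 <= k <= m. *)
Definition lvertex (m : nat) := (bool * 'I_m.+1)%type.

(* Edges: inl (inl i) = north edge u_i u_(i+1)  (i = k-1, 0 <= i < m),
          inl (inr i) = south edge v_i v_(i+1),
          inr k       = rung u_k v_k. *)
Definition ledge (m : nat) := (('I_m + 'I_m) + 'I_m.+1)%type.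

Definition lincident (m : nat) (e : ledge m) (x : lvertex m) : bool :=
  match e with
  | inl (inl i) => x.1 && ((x.2 == i :> nat) || (x.2 == i.+1 :> nat))
  | inl (inr i) => ~~ x.1 && ((x.2 == i :> nat) || (x.2 == i.+1 :> nat))
  | inr k => x.2 == k
  end.

Definition lweight (R : ringType) (y : int -> R) (a : int) (m : nat)
    (e : ledge m) : R :=
  match e with
  | inl (inl i) => y (a + (i : nat)%:Z + 1)
  | inl (inr i) => y (a + (i : nat)%:Z - 1)
  | inr _ => 1
  end.

Definition perfect_matching (m : nat) (M : {set ledge m}) : bool :=
  [forall x : lvertex m, #|[set e in M | lincident e x]| == 1%N].

Definition Pladder (R : comRingType) (y : int -> R) (a : int) (m : nat) : R :=
  \sum_(M : {set ledge m} | perfect_matching M) \prod_(e in M) lweight y a e.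

Definition Qladder (R : fieldType) (y : int -> R) (a : int) (m : nat) : R :=
  Pladder y a m / \prod_(i < m) y (a + (i : nat)%:Z).

(* Specialization (1): y_0 = t, y_1 = 1, y_n = z n for n >= 2,
   y_(-i) = - y_i for i >= 1. *)
Definition ypos (R : ringType) (t : R) (z : nat -> R) (n : nat) : R :=
  match n with 0%N => t | 1%N => 1 | _ => z n end.

Definition yspec1 (R : ringType) (t : R) (z : nat -> R) (k : int) : R :=
  match k with
  | Posz n => ypos t z n
  | Negz n => - ypos t z n.+1
  end.

(* Specialization (2): y_k = w k for k <= N-1, y_N = 1, y_(N+1) = s,
   y_(N+1+k) = - y_(N+1-k) for k >= 1. *)
Definition ybase2 (R : ringType) (N : int) (w : int -> R) (k : int) : R :=
  if k == N then 1 else w k.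

Definition yspec2 (R : ringType) (N : int) (s : R) (w : int -> R) (k : int) : R :=
  if k <= N then ybase2 N w k
  else if k == N + 1 then s
  else - ybase2 N w (2 * (N + 1) - k).

(* Main.v *)
Require Import Defs.
From HB Require Import structures.
From mathcomp Require Import all_boot all_order all_algebra.
From mathcomp Require Import all_classical all_reals all_analysis.
From mathcomp Require Import zify ring lra.
Set Implicit Arguments. Unset Strict Implicit. Unset Printing Implicit Defensive.
Import Order.TTheory GRing.Theory Num.Theory.
Import numFieldNormedType.Exports.
Local Open Scope classical_set_scope.
Local Open Scope ring_scope.

Section Cont.
Variable R : comRingType.
Implicit Types (c d : int -> R) (a : int).

Fixpoint Kg c a (v : R * R) (n : nat) : R * R :=
  match n with
  | 0%N => v
  | n'.+1 => ((Kg c a v n').1 + c (a + (n' : nat)%:Z) * (Kg c a v n').2, (Kg c a v n').1)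
  end.

Lemma KgS c a v n : Kg c a v n.+1 =
  ((Kg c a v n).1 + c (a + n%:Z) * (Kg c a v n).2, (Kg c a v n).1).
Proof. by []. Qed.

Lemma Kg_add c a v m n : Kg c a v (m + n) = Kg c (a + m%:Z) (Kg c a v m) n.
Proof.
elim: n => [|n IH]; first by rewrite addn0.
by rewrite addnS !KgS IH PoszD addrA.
Qed.

Lemma Kg_lin c a p q n : Kg c a (p, q) n =
  (p * (Kg c a (1,0) n).1 + q * (Kg c a (0,1) n).1,
   p * (Kg c a (1,0) n).2 + q * (Kg c a (0,1) n).2).
Proof.
elim: n => [|n IH] /=; first by congr pair; ring.
by rewrite IH /=; congr pair; ring.
Qed.

Lemma Kg_ext c d a b v n : (forall k, (k < n)%N -> c (a + k%:Z) = d (b + k%:Z)) ->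
  Kg c a v n = Kg d b v n.
Proof.
elim: n => [|n IH] H //=.
rewrite IH ?H //; move=> k Hk; apply: H; exact: ltnW.
Qed.

Lemma Kg_LR c a n : Kg c a (1,1) n.+2 =
  ((Kg c (a+1) (1,1) n.+1).1 + c a * (Kg c (a+2) (1,1) n).1,
   (Kg c (a+1) (1,1) n.+1).2 + c a * (Kg c (a+2) (1,1) n).2).
Proof.
have -> : n.+2 = (1 + n.+1)%N by [].
rewrite Kg_add.
have -> : Kg c a (1,1) 1 = (1 + c a, 1) by rewrite /= addr0 mulr1.
have -> : a + (1%N)%:Z = a + 1 by [].
rewrite Kg_lin [Kg c (a+1) (1,1) _]Kg_lin.
have -> : Kg c (a + 1) (1, 0) n.+1 = Kg c (a+2) (1,1) n.
  have -> : n.+1 = (1 + n)%N by [].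
  rewrite Kg_add.
  have -> : Kg c (a + 1) (1, 0) 1 = (1,1) by rewrite /= mulr0 addr0.
  by rewrite -addrA.
rewrite /=; congr pair; ring.
Qed.

Lemma Kg_rev c e n :
  Kg c (e - n%:Z) (1,1) n =
  ((Kg (fun i => c (- i)) (1 - e) (1,1) n).1, (Kg (fun i => c (- i)) (1 - e) (1,0) n).1).
Proof.
set d := fun i => c (- i).
suff : Kg c (e - n%:Z) (1,1) n =
  ((Kg d (1 - e) (1,1) n).1, (Kg d (1 - e) (1,0) n).1) /\
  Kg c (e - n.+1%:Z) (1,1) n.+1 =
  ((Kg d (1 - e) (1,1) n.+1).1, (Kg d (1 - e) (1,0) n.+1).1) by case.
elim: n => [|n [IH1 IH2]].
  split; first by rewrite subr0.
  rewrite /= /d !addr0 !mulr1 !mulr0 !addr0; congr (_ + c _, _); lia.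
split; first exact: IH2.
rewrite Kg_LR.
have -> : e - n.+2%:Z + 1 = e - n.+1%:Z by lia.
have -> : e - n.+2%:Z + 2 = e - n%:Z by lia.
rewrite IH1 IH2 /=.
have -> : d (1 - e + n.+1%:Z) = c (e - n.+2%:Z) by rewrite /d; congr c; lia.
by [].
Qed.

Definition Uc c o n := (Kg c (o+2) (1,0) n).1.
Definition Vc c o n := (Kg c (o+2) (0,1) n).1.

Lemma core c o x n m :
  c (o-1) = -x -> c o = -1 -> c (o+1) = x ->
  (forall i : nat, c (o - i.+2%:Z) = c (o + i.+2%:Z)) ->
  (Kg c (o - n.+1%:Z) (1,1) (n + 3 + m)).1 =
    x * (Vc c o n * Uc c o m - Uc c o n * Vc c o m) - x^+2 * Uc c o n * Uc c o m.
Proof.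
move=> Hm Ho Hp Hs.
have HL : Kg c (o - n.+1%:Z) (1,1) n = (Uc c o n + Vc c o n, Uc c o n).
  have -> : o - n.+1%:Z = (o - 1) - n%:Z by lia.
  rewrite Kg_rev.
  rewrite (@Kg_ext _ c _ (o+2)); last first.
    move=> k _; rewrite (_ : o + 2 + k%:Z = o + k.+2%:Z); last by lia.
    rewrite -Hs; congr c; lia.
  rewrite (@Kg_ext (fun i => c (- i)) c _ (o+2) (1,0)); last first.
    move=> k _; rewrite (_ : o + 2 + k%:Z = o + k.+2%:Z); last by lia.
    rewrite -Hs; congr c; lia.
  by rewrite Kg_lin /Uc /Vc /= !mul1r.
rewrite Kg_add Kg_add HL.
have -> : o - n.+1%:Z + n%:Z = o - 1 by lia.
have -> : o - n.+1%:Z + (n + 3)%N%:Z = o + 2 by lia.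
rewrite /= !addr0.
have -> : o - 1 + 1 = o by lia.
have -> : o - 1 + 2 = o + 1 by lia.
rewrite Hm Ho Hp Kg_lin /Uc /Vc /=.
ring.
Qed.

Definition Wr c o n := Vc c o n * Uc c o n.+1 - Uc c o n * Vc c o n.+1.

Lemma Wr0 c o : Wr c o 0 = - c (o + 2).
Proof. rewrite /Wr /Uc /Vc /=. rewrite !addr0; ring. Qed.

Lemma WrS c o n : Wr c o n.+1 = - c (o + 2 + n.+1%:Z) * Wr c o n.
Proof. rewrite /Wr /Uc /Vc [Kg _ _ _ n.+2]KgS [Kg _ _ _ n.+2]KgS /=. ring. Qed.

Lemma UcSS c o n : Uc c o n.+2 = Uc c o n.+1 + c (o + 2 + n.+1%:Z) * Uc c o n.
Proof. by []. Qed.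

End Cont.

Definition cc (R : comRingType) (y : int -> R) (i : int) := y (i + 1) * y (i - 1).

Section Comb.
Variable R : comRingType.
Variable y : int -> R.
Variable a : int.

Definition cnt m (M : {set ledge m}) (x : lvertex m) := #|[set e in M | lincident e x]|.
Definition good m (st : nat) (M : {set ledge m}) :=
  [forall x : lvertex m, cnt M x == (if (x.2 : nat) == m then st else 1%N)].
Definition Gs m st := \sum_(M : {set ledge m} | good st M) \prod_(e in M) lweight y a e.

Definition extm m (M : {set ledge m}) (b : bool * (bool * bool)) : {set ledge m.+1} :=
 [set e | match e with
   | inl (inl i) => if unlift ord_max i is Some j then inl (inl j) \in M else b.1
   | inl (inr i) => if unlift ord_max i is Some j then inl (inr j) \in M else b.2.1
   | inr k => if unlift ord_max k is Some j then inr j \in M else b.2.2 end].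

Lemma unlift_widen n (j : 'I_n) : unlift ord_max (widen_ord (leqnSn n) j) = Some j.
Proof.
have -> : widen_ord (leqnSn n) j = lift ord_max j by apply: val_inj => /=; rewrite /bump leqNgt ltn_ord.
exact: liftK.
Qed.

Lemma weq n (j k : 'I_n) : (widen_ord (leqnSn n) j == widen_ord (leqnSn n) k) = (j == k).
Proof. by apply/eqP/eqP => [/(congr1 val) /= H|->] //; apply: val_inj. Qed.

Lemma cnt_sum m (M : {set ledge m}) x :
  cnt M x = (\sum_(i < m) ((inl (inl i) \in M) && lincident (inl (inl i)) x)
          + \sum_(i < m) ((inl (inr i) \in M) && lincident (inl (inr i)) x)
          + \sum_(k < m.+1) ((inr k \in M) && lincident (inr k) x))%N.
Proof.
rewrite /cnt -sum1dep_card big_mkcond !big_sumType /=.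
by congr (_ + _ + _)%N; apply: eq_bigr => i _; case: (_ && _).
Qed.

Section Ext.
Variables (m : nat) (M : {set ledge m}) (bn bs br : bool).
Let b := (bn, (bs, br)).

Lemma sumN_ext x : (\sum_(i < m.+1) ((inl (inl i) \in extm M b) && lincident (inl (inl i)) x))%N =
  (\sum_(i < m) ((inl (inl i) \in M) && lincident (inl (inl (widen_ord (leqnSn m) i))) x)
   + (bn && lincident (inl (inl ord_max)) x))%N.
Proof.
rewrite big_ord_recr /= inE /= unlift_none; congr (_ + _)%N.
by apply: eq_bigr => i _; rewrite inE /= unlift_widen.
Qed.

Lemma sumS_ext x : (\sum_(i < m.+1) ((inl (inr i) \in extm M b) && lincident (inl (inr i)) x))%N =
  (\sum_(i < m) ((inl (inr i) \in M) && lincident (inl (inr (widen_ord (leqnSn m) i))) x)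
   + (bs && lincident (inl (inr ord_max)) x))%N.
Proof.
rewrite big_ord_recr /= inE /= unlift_none; congr (_ + _)%N.
by apply: eq_bigr => i _; rewrite inE /= unlift_widen.
Qed.

Lemma sumR_ext x : (\sum_(i < m.+2) ((inr i \in extm M b) && lincident (inr i) x))%N =
  (\sum_(i < m.+1) ((inr i \in M) && lincident (inr (widen_ord (leqnSn m.+1) i)) x)
   + (br && lincident (inr ord_max) x))%N.
Proof.
rewrite big_ord_recr /= inE /= unlift_none; congr (_ + _)%N.
by apply: eq_bigr => i _; rewrite inE /= unlift_widen.
Qed.

Lemma cnt_ext_low b0 (k : 'I_m.+1) :
  cnt (extm M b) (b0, widen_ord (leqnSn _) k) =
  (cnt M (b0, k) + (if (k : nat) == m then (if b0 then bn else bs) else false))%N.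
Proof.
rewrite !cnt_sum sumN_ext sumS_ext sumR_ext /=.
have -> : (\sum_(i < m.+1) ((inr i \in M) &&
       (widen_ord (leqnSn m.+1) k == widen_ord (leqnSn m.+1) i)))%N =
    (\sum_(k0 < m.+1) ((inr k0 \in M) && (k == k0)))%N.
  by apply: eq_bigr => i _; rewrite weq.
have -> : (widen_ord (leqnSn m.+1) k == ord_max) = false.
  by apply/negbTE; rewrite -val_eqE /= neq_ltn ltn_ord.
rewrite (ltn_eqF (ltn_ord k)) !orbF.
case: b0; case: bn; case: bs; case: (k == m :> nat); rewrite /= ?andbF ?andbT; lia.
Qed.

Lemma cnt_ext_top b0 :
  cnt (extm M b) (b0, ord_max) = ((if b0 then bn else bs) + br)%N.
Proof.
rewrite !cnt_sum sumN_ext sumS_ext sumR_ext /=.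
rewrite !big1 //=.
- rewrite !eqxx andbT; case: b0; case: bn; case: bs => /=; lia.
- move=> i _; have Hi := ltn_ord i.
  rewrite (_ : (ord_max == _) = false) ?andbF //; apply/negbTE.
  rewrite -val_eqE /=; lia.
- move=> i _; have Hi := ltn_ord i.
  rewrite (_ : (m.+1 == i) = false); last by lia.
  by rewrite (_ : (m.+1 == i.+1) = false) ?andbF //; lia.
- move=> i _; have Hi := ltn_ord i.
  rewrite (_ : (m.+1 == i) = false); last by lia.
  by rewrite (_ : (m.+1 == i.+1) = false) ?andbF //; lia.
Qed.

Lemma lift_widen n (j : 'I_n) : lift ord_max j = widen_ord (leqnSn n) j.
Proof. by apply: val_inj => /=; rewrite /bump leqNgt ltn_ord. Qed.

Lemma good_ext st :
  good st (extm M b) = [&& bn == bs, (bn + br == st)%N & good (1 - bn) M].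
Proof.
apply/idP/idP.
- move/forallP => H.
  have Ht := H (true, ord_max); have Hf := H (false, ord_max).
  rewrite cnt_ext_top /= eqxx in Ht.
  rewrite cnt_ext_top /= eqxx in Hf.
  have Hbb : bn == bs.
    by move: Ht Hf; case: bn; case: bs; case: br => /= /eqP <- //.
  rewrite Hbb Ht /=; apply/forallP => -[b0 k].
  have := H (b0, widen_ord (leqnSn _) k).
  rewrite cnt_ext_low /=.
  have -> : ((k : nat) == m.+1) = false by have := ltn_ord k; lia.
  move: Hbb => /eqP <-.
  case: (k == m :> nat); last by rewrite addn0.
  by case: b0; case: bn; rewrite /= ?addn0 ?addn1 ?subn0 ?subnn; move=> H0; exact: H0.
- case/and3P => /eqP Hbb Hst /forallP H; apply/forallP => -[b0 k'].
  case: (unliftP ord_max k') => [j ->|->].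
  + rewrite lift_widen cnt_ext_low /=.
    have Hj : (j < m.+1)%N := ltn_ord j.
    rewrite (_ : ((j : nat) == m.+1) = false); last by lia.
    have := H (b0, j); rewrite /= -Hbb.
    case: (j == m :> nat); last by rewrite addn0.
    by case: b0; case: bn; rewrite /= ?addn0 ?addn1 ?subn0 ?subnn; move=> H0; exact: H0.
  + rewrite cnt_ext_top /= eqxx -Hbb.
    by case: b0.
Qed.

Lemma prod_ext : \prod_(e in extm M b) lweight y a e =
  \prod_(e in M) lweight y a e * (if bn then y (a + m%:Z + 1) else 1)
    * (if bs then y (a + m%:Z - 1) else 1).
Proof.
rewrite big_mkcond [in RHS]big_mkcond !big_sumType /=.
rewrite [X in _ * X = _]big1; last by move=> k _; case: ifP.
rewrite [X in _ = _ * X * _ * _]big1; last by move=> k _; case: ifP.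
rewrite !big_ord_recr /=.
have EN : \prod_(i < m) (if inl (inl (widen_ord (leqnSn m) i)) \in extm M b
     then lweight y a (inl (inl (widen_ord (leqnSn m) i)) : ledge m.+1) else 1) =
   \prod_(i < m) (if inl (inl i) \in M then lweight y a (inl (inl i) : ledge m) else 1).
  by apply: eq_bigr => i _; rewrite inE /= unlift_widen.
have ES : \prod_(i < m) (if inl (inr (widen_ord (leqnSn m) i)) \in extm M b
     then lweight y a (inl (inr (widen_ord (leqnSn m) i)) : ledge m.+1) else 1) =
   \prod_(i < m) (if inl (inr i) \in M then lweight y a (inl (inr i) : ledge m) else 1).
  by apply: eq_bigr => i _; rewrite inE /= unlift_widen.
rewrite EN ES !inE /= !unlift_none /=.
rewrite mulr1 -!mulrA; congr (_ * _); rewrite mulrCA; congr (_ * _).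
by rewrite mul1r.
Qed.

End Ext.

Definition emb m (e : ledge m) : ledge m.+1 :=
  match e with
  | inl (inl i) => inl (inl (lift ord_max i))
  | inl (inr i) => inl (inr (lift ord_max i))
  | inr k => inr (lift ord_max k)
  end.

Lemma extm_bij m : bijective (fun p : {set ledge m} * (bool * (bool * bool)) => extm p.1 p.2).
Proof.
exists (fun M' : {set ledge m.+1} => ([set e | emb e \in M']%SET,
  (inl (inl ord_max) \in M', (inl (inr ord_max) \in M', inr ord_max \in M')))).
- move=> [M [bn [bs br]]] /=; congr pair.
    by apply/setP => -[[i|i]|k]; rewrite !inE /= liftK.
  by rewrite !inE /= !unlift_none.
- move=> M'; apply/setP => -[[i|i]|k]; rewrite !inE /=;
  by case: unliftP => [j ->|->]; rewrite ?inE.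
Qed.

Lemma sum_pair (I J : finType) (F : I * J -> R) :
  \sum_(p : I * J) F p = \sum_(i : I) \sum_(j : J) F (i, j).
Proof. by rewrite pair_bigA; apply: eq_bigr => -[i j] _. Qed.

Lemma Gs_ext m st : Gs m.+1 st = \sum_(M : {set ledge m}) \sum_(b : bool * (bool * bool))
  (if good st (extm M b) then \prod_(e in extm M b) lweight y a e else 0).
Proof.
rewrite /Gs (reindex (fun p : {set ledge m} * (bool * (bool * bool)) => extm p.1 p.2)) /=;
  last by apply: onW_bij; exact: extm_bij.
by rewrite big_mkcond sum_pair.
Qed.

Lemma Gs_rec1 m : Gs m.+1 1 = Gs m 1 + cc y (a + m%:Z) * Gs m 0.
Proof.
rewrite Gs_ext /Gs mulr_sumr (big_mkcond (fun M => good 1 M)) (big_mkcond (fun M => good 0 M)) -big_split /=; apply: eq_bigr => M _.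
rewrite sum_pair !big_bool !sum_pair !big_bool /= !good_ext !prod_ext /= /cc.
case: (good 1 M); case: (good 0 M) => /=; ring.
Qed.

Lemma Gs_rec0 m : Gs m.+1 0 = Gs m 1.
Proof.
rewrite Gs_ext /Gs (big_mkcond (fun M => good 1 M)) /=; apply: eq_bigr => M _.
rewrite sum_pair !big_bool !sum_pair !big_bool /= !good_ext !prod_ext /=.
case: (good 1 M) => /=; ring.
Qed.

Lemma cnt0 (M : {set ledge 0}) x : cnt M x = (inr ord0 \in M) :> nat.
Proof.
rewrite cnt_sum !big_ord0 big_ord1 /= !add0n.
by case: x => b0 k; rewrite (ord1 k) eqxx andbT.
Qed.

Lemma good0 st (M : {set ledge 0}) : good st M = (((inr ord0 \in M) : nat) == st).
Proof.
apply/forallP/idP => [H|H x].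
  by have := H (true, ord0); rewrite cnt0.
by case: x => b0 k; rewrite cnt0 (ord1 k) /=.
Qed.

Lemma Gs0 st : Gs 0 st = ((1%N == st)%:R + (0%N == st)%:R : R).
Proof.
rewrite /Gs (reindex (fun b : bool => if b then [set inr ord0]%SET else finset.set0)) /=; last first.
  apply: onW_bij; exists (fun M : {set ledge 0} => inr ord0 \in M).
    by case; rewrite ?inE ?eqxx.
  move=> M; apply/setP => -[[i|i]|k]; try by case: i.
  rewrite (ord1 k); case: ifP => H; rewrite ?inE ?eqxx ?H //.
rewrite big_mkcond big_bool /= !good0 !inE ?eqxx /=.
rewrite big_set1 big_set0 /=.
by case: (1%N == st); case: (0%N == st).
Qed.

Lemma Gs_Kg m : (Gs m 1, Gs m 0) = Kg (cc y) a (1,1) m.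
Proof.
elim: m => [|m IH].
  by rewrite !Gs0 /= addr0 add0r.
by rewrite KgS -IH /= Gs_rec1 Gs_rec0.
Qed.

Lemma Pladder_Gs m : Pladder y a m = Gs m 1.
Proof.
rewrite /Pladder /Gs; apply: eq_bigl => M.
by rewrite /perfect_matching /good; apply: eq_forallb => x; rewrite if_same.
Qed.

End Comb.

Lemma Pladder_Kg (R : comRingType) (y : int -> R) a m :
  Pladder y a m = (Kg (cc y) a (1,1) m).1.
Proof. by rewrite Pladder_Gs -Gs_Kg. Qed.

Definition wprod (R : comRingType) (f : int -> R) (a : int) (m : nat) :=
  \prod_(i < m) f (a + (i : nat)%:Z).

Lemma wprodSr (R : comRingType) (f : int -> R) a m :
  wprod f a m.+1 = wprod f a m * f (a + m%:Z).
Proof. by rewrite /wprod big_ord_recr. Qed.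

Lemma wprodSl (R : comRingType) (f : int -> R) a m :
  wprod f a m.+1 = f a * wprod f (a + 1) m.
Proof.
rewrite /wprod big_ord_recl addr0; congr (_ * _); apply: eq_bigr => i _.
congr f; rewrite /= -addrA; congr (_ + _); lia.
Qed.

Lemma wprod_pull (R : comRingType) (f g : int -> R) a m (i : 'I_m) :
  (forall k, k != a + (i:nat)%:Z -> f k = g k) -> g (a + (i:nat)%:Z) = 1 ->
  wprod f a m = f (a + (i:nat)%:Z) * wprod g a m.
Proof.
move=> Hfg Hg; rewrite /wprod (bigD1 i) //= [X in _ = _ * X](bigD1 i) //= Hg mul1r.
congr (_ * _); apply: eq_bigr => j Hj; apply: Hfg.
apply/negP => /eqP H; move: Hj; rewrite /= => /eqP; apply; apply: val_inj => /=.
by move: H => /addrI [].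
Qed.

Lemma wprod_neq0 (R : idomainType) (f : int -> R) a m :
  (forall k, f k != 0) -> wprod f a m != 0.
Proof. by move=> H; apply/prodf_neq0 => i _. Qed.

Lemma lim_aux (R : realType) (f : R -> R) (A B C L : R) :
  (forall t, t != 0 -> f t = (A - t * B) / C) -> A / C = L ->
  f t @[t --> (0:R)^'] --> L.
Proof.
move=> Hf <-.
have E : {near (0:R)^', (fun t => A / C - t * (B / C)) =1 f}.
  near=> t; rewrite Hf; last by near: t; exact: nbhs_dnbhs_neq.
  by rewrite mulrBl mulrA.
apply: cvg_trans (near_eq_cvg E) _.
apply: cvg_within_filter.
have H0 : (fun t : R => A / C - t * (B / C)) @ (0:R) --> A / C - 0 * (B / C).
  apply: cvgB; first exact: cvg_cst.
  apply: cvgMl; exact: cvg_id.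
by rewrite mul0r subr0 in H0.
Unshelve. all: by end_near.
Qed.

Lemma ttdiv (R : fieldType) (t u v : R) : t != 0 -> (t * u) / (t * v) = u / v.
Proof. by move=> Ht; rewrite -mulf_div mulfV // mul1r. Qed.

Lemma K1 (F : comRingType) (c : int -> F) a : (Kg c a (1,1) 1).1 = 1 + c a.
Proof. by rewrite /= addr0 mulr1. Qed.
Lemma K3 (F : comRingType) (c : int -> F) a :
  (Kg c a (1,1) 3).1 = 1 + c a + c (a + 1) + c (a + 2) * (1 + c a).
Proof. rewrite /= addr0 !mulr1. by []. Qed.
Lemma K2 (F : comRingType) (c : int -> F) a :
  (Kg c a (1,1) 2).1 = 1 + c a + c (a + 1).
Proof. rewrite /= addr0 !mulr1. by []. Qed.
Lemma wprod1 (F : comRingType) (f : int -> F) a : wprod f a 1 = f a.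
Proof. by rewrite wprodSl /wprod big_ord0 mulr1. Qed.
Lemma wprod2 (F : comRingType) (f : int -> F) a : wprod f a 2 = f a * f (a + 1).
Proof. by rewrite wprodSr wprod1. Qed.
Lemma wprod3 (F : comRingType) (f : int -> F) a : wprod f a 3 = f a * f (a + 1) * f (a + 2).
Proof. by rewrite wprodSr wprod2. Qed.

Section Spec1.
Variable R : realType.
Variable z : nat -> R.

Lemma ys1_ne0 t i : i != 0 -> yspec1 t z i = yspec1 1 z i.
Proof. by case: i => [[|[|n]]|n]. Qed.

Lemma ys1_neg t n : yspec1 t z (- n.+1%:Z) = - ypos t z n.+1.
Proof. by []. Qed.

Lemma ys1_nz : (forall n, (2 <= n)%N -> z n != 0) -> forall k, yspec1 1 z k != 0.
Proof.
move=> Hz; case=> [[|[|n]]|[|n]] /=; rewrite ?oppr_eq0 ?oner_eq0 //; exact: Hz.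
Qed.

Let c t := cc (yspec1 t z).

Lemma c0 t : cc (yspec1 t z) 0 = -1.
Proof. by rewrite /cc add0r sub0r mul1r (ys1_neg t 0). Qed.
Lemma c1 t : cc (yspec1 t z) 1 = t * z 2.
Proof. by rewrite /cc subrr (_ : (1:int) + 1 = 2%N%:Z) // mulrC. Qed.
Lemma c2 t : cc (yspec1 t z) 2 = z 3.
Proof. by rewrite /cc (_ : (2:int) + 1 = 3%N%:Z) // (_ : (2:int) - 1 = 1%N%:Z) // /= mulr1. Qed.
Lemma y0 t : yspec1 t z 0 = t. Proof. by []. Qed.
Lemma y1 t : yspec1 t z 1 = 1. Proof. by []. Qed.
Lemma y2 t : yspec1 t z 2 = z 2. Proof. by []. Qed.

Lemma c_ext t k : c t (2 + k%:Z) = c 1 (2 + k%:Z).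
Proof. by rewrite /c /cc !(@ys1_ne0 t) //; lia. Qed.

Lemma Uc_ext t n : Uc (c t) 0 n = Uc (c 1) 0 n.
Proof. rewrite /Uc; congr (_).1; apply: Kg_ext => k _; rewrite !add0r; exact: c_ext. Qed.
Lemma Vc_ext t n : Vc (c t) 0 n = Vc (c 1) 0 n.
Proof. rewrite /Vc; congr (_).1; apply: Kg_ext => k _; rewrite !add0r; exact: c_ext. Qed.

Lemma P1K t n m : (Kg (c t) (0 - n.+1%:Z) (1,1) (n + 3 + m)).1 =
  (t * z 2) * (Vc (c 1) 0 n * Uc (c 1) 0 m - Uc (c 1) 0 n * Vc (c 1) 0 m)
  - (t * z 2)^+2 * Uc (c 1) 0 n * Uc (c 1) 0 m.
Proof.
rewrite (@core _ _ _ (t * z 2)).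
- by rewrite !Uc_ext !Vc_ext.
- rewrite /c /cc (_ : 0 - 1 + 1 = 0) // (_ : 0 - 1 - 1 = - 2%N%:Z) //.
  by rewrite ys1_neg /= mulrN.
- by rewrite /c /cc (_ : 0 + 1 = 1) // (_ : 0 - 1 = - 1%N%:Z) // ys1_neg /= mulrN1.
- by rewrite /c /cc (_ : 0 + 1 + 1 = 2%N%:Z) // (_ : 0 + 1 - 1 = 0) // mulrC.
- move=> i; rewrite /c /cc.
  rewrite (_ : 0 - i.+2%:Z + 1 = - i.+1%:Z); last by lia.
  rewrite (_ : 0 - i.+2%:Z - 1 = - i.+3%:Z); last by lia.
  rewrite (_ : 0 + i.+2%:Z + 1 = i.+3%:Z); last by lia.
  rewrite (_ : 0 + i.+2%:Z - 1 = i.+1%:Z); last by lia.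
  by rewrite !ys1_neg mulrNN mulrC.
Qed.

Lemma id1a n : z 2 * Wr (c 1) 0 n = z n.+3 * wprod (yspec1 1 z) (- n.+1%:Z) (n + 3 + n.+1).
Proof.
elim: n => [|n IH].
  rewrite Wr0 /c /cc (_ : 0 + 2 + 1 = 3%N%:Z) // (_ : 0 + 2 - 1 = 1%N%:Z) //.
  rewrite !wprodSl /wprod big_ord0 (_ : - 1%N%:Z + 1 = 0) // (_ : 0 + 1 = 1%N%:Z) //.
  rewrite (_ : 1%N%:Z + 1 = 2%N%:Z) //= mulr1 mulN1r mul1r. ring.
rewrite WrS.
have -> : (n.+1 + 3 + n.+2 = (n + 3 + n.+1).+2)%N by lia.
rewrite wprodSl wprodSr.
rewrite (_ : - n.+2%:Z + 1 = - n.+1%:Z); last by lia.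
rewrite (_ : - n.+1%:Z + (n + 3 + n.+1)%N%:Z = n.+3%:Z); last by lia.
rewrite /c /cc (_ : 0 + 2 + n.+1%:Z + 1 = n.+4%:Z); last by lia.
rewrite (_ : 0 + 2 + n.+1%:Z - 1 = n.+2%:Z); last by lia.
rewrite ys1_neg /=.
transitivity (- (z n.+4 * z n.+2) * (z 2 * Wr (cc (yspec1 1 z)) 0 n)); first by ring.
rewrite IH; ring.
Qed.

Lemma wprod_ys1 t a m (i : 'I_m) : a + (i : nat)%:Z = 0 ->
  wprod (yspec1 t z) a m = t * wprod (yspec1 1 z) a m.
Proof.
move=> Hi; rewrite (@wprod_pull _ _ (yspec1 1 z) _ _ i).
- by rewrite Hi.
- by move=> k; rewrite Hi => Hk; rewrite ys1_ne0.
- by rewrite Hi.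
Qed.

Lemma Qladder_wprod (F : fieldType) (y : int -> F) a m :
  Qladder y a m = Pladder y a m / wprod y a m.
Proof. by []. Qed.

Lemma Wr2 (F : comRingType) (d : int -> F) o n :
  Vc d o n * Uc d o n.+2 - Uc d o n * Vc d o n.+2 = Wr d o n.
Proof. rewrite /Wr /Uc /Vc [Kg _ _ _ n.+2]KgS [Kg _ _ _ n.+2]KgS /=. ring. Qed.

Hypothesis Hz : forall n, (2 <= n)%N -> z n != 0.

Lemma part1a j : Qladder (yspec1 t z) (- j%:Z) (2*j).+2 @[t --> (0:R)^'] --> z j.+2.
Proof.
case: j => [|n].
  apply: (@lim_aux _ _ (z 2) 0 1); last by rewrite divr1.
  move=> t Ht; rewrite Qladder_wprod Pladder_Kg K2 wprod2.
  rewrite (_ : - 0%N%:Z = 0) // add0r c0 c1 y0 y1.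
  by rewrite mulr0 subr0 divr1 mulr1 subrr add0r [t * z 2]mulrC mulfK.
apply: (@lim_aux _ _ (z 2 * Wr (c 1) 0 n) (z 2 ^+ 2 * Uc (c 1) 0 n * Uc (c 1) 0 n.+1)
   (wprod (yspec1 1 z) (- n.+1%:Z) (n + 3 + n.+1))).
  move=> t Ht; rewrite Qladder_wprod Pladder_Kg.
  have -> : ((2 * n.+1).+2 = n + 3 + n.+1)%N by lia.
  have -> : - n.+1%:Z = 0 - n.+1%:Z by rewrite sub0r.
  have Hb : (n.+1 < n + 3 + n.+1)%N by lia.
  rewrite P1K sub0r (@wprod_ys1 t _ _ (Ordinal Hb)); last by rewrite /=; lia.
rewrite -[in RHS](ttdiv _ _ Ht); congr (_ / _); rewrite /Wr; ring.
rewrite id1a mulfK //; apply: wprod_neq0; exact: ys1_nz.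
Qed.

Lemma part1b k : Qladder (yspec1 t z) (1 - k%:Z) (2*k).+1 @[t --> (0:R)^'] --> (1:R).
Proof.
case: k => [|[|n]].
- apply: (@lim_aux _ _ 1 (- z 2) 1); last by rewrite divr1.
  move=> t Ht; rewrite Qladder_wprod Pladder_Kg K1 wprod1.
  rewrite (_ : 1 - 0%N%:Z = 1); last by lia.
  by rewrite c1 y1 !divr1 mulrN opprK.
- apply: (@lim_aux _ _ 1 0 1); last by rewrite divr1.
  move=> t Ht; rewrite Qladder_wprod Pladder_Kg K3 wprod3.
  rewrite (_ : 1 - 1%N%:Z = 0); last by lia.
  rewrite !add0r c0 c1 c2 y0 y1 y2. rewrite subrr add0r mulr0 addr0 mulr0 subr0 divr1 mulr1.
  have H2 := Hz (isT : (2 <= 2)%N).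
  by rewrite divff //; exact: mulf_neq0.
apply: (@lim_aux _ _ (z 2 * Wr (c 1) 0 n) (z 2 ^+ 2 * Uc (c 1) 0 n * Uc (c 1) 0 n.+2)
   (wprod (yspec1 1 z) (- n.+1%:Z) (n + 3 + n.+2))).
  move=> t Ht; rewrite Qladder_wprod Pladder_Kg.
  have -> : ((2 * n.+2).+1 = n + 3 + n.+2)%N by lia.
  have -> : 1 - n.+2%:Z = 0 - n.+1%:Z by lia.
  have Hb : (n.+1 < n + 3 + n.+2)%N by lia.
  rewrite P1K sub0r (@wprod_ys1 t _ _ (Ordinal Hb)); last by rewrite /=; lia.
rewrite -[in RHS](ttdiv _ _ Ht); congr (_ / _); rewrite -Wr2; ring.
have -> : (n + 3 + n.+2 = (n + 3 + n.+1).+1)%N by lia.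
rewrite wprodSr id1a (_ : - n.+1%:Z + (n + 3 + n.+1)%N%:Z = n.+3%:Z); last by lia.
rewrite /= [X in _ / X]mulrC divff //; apply: mulf_neq0; first exact: Hz.
apply: wprod_neq0; exact: ys1_nz.
Qed.

End Spec1.

Section Spec2.
Variable R : realType.
Variable N : int.
Variable w : int -> R.

Lemma ys2_le s k : k <= N -> yspec2 N s w k = ybase2 N w k.
Proof. by move=> H; rewrite /yspec2 H. Qed.
Lemma ys2_N1 s : yspec2 N s w (N + 1) = s.
Proof. rewrite /yspec2 ifF ?eqxx //; apply/negbTE; lia. Qed.
Lemma ys2_gt s k : N + 2 <= k -> yspec2 N s w k = - ybase2 N w (2 * (N + 1) - k).
Proof.
move=> H; rewrite /yspec2 ifF; last by apply/negbTE; lia.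
by rewrite ifF //; apply/negbTE; lia.
Qed.
Lemma yb_N : ybase2 N w N = 1.
Proof. by rewrite /ybase2 eqxx. Qed.
Lemma yb_ne k : k != N -> ybase2 N w k = w k.
Proof. by move=> H; rewrite /ybase2 (negbTE H). Qed.
Lemma ys2_ne s k : k != N + 1 -> yspec2 N s w k = yspec2 N 1 w k.
Proof. by move=> H; rewrite /yspec2; case: ifP => // _; rewrite (negbTE H). Qed.

Hypothesis Hw : forall k : int, k <= N - 1 -> w k != 0.

Lemma ys2_nz k : yspec2 N 1 w k != 0.
Proof.
have Hb : forall j, j <= N -> ybase2 N w j != 0.
  move=> j Hj; case: (eqVneq j N) => [->|Hn]; first by rewrite yb_N oner_eq0.
  by rewrite yb_ne // Hw //; lia.
case: (lerP k N) => H1; first by rewrite ys2_le // Hb.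
case: (eqVneq k (N + 1)) => [->|H2]; first by rewrite ys2_N1 oner_eq0.
rewrite ys2_gt; last by lia.
by rewrite oppr_eq0 Hb //; lia.
Qed.

Let y s := yspec2 N s w.
Let d s := fun i => cc (y s) (- i).
Let o := - (N + 1).

Lemma d_ext s k : d s (o + 2 + k%:Z) = d 1 (o + 2 + k%:Z).
Proof. by rewrite /d /cc /y !(@ys2_ne s) //; lia. Qed.

Lemma Uc2_ext s n : Uc (d s) o n = Uc (d 1) o n.
Proof. rewrite /Uc; congr (_).1; apply: Kg_ext => k _; exact: d_ext. Qed.
Lemma Vc2_ext s n : Vc (d s) o n = Vc (d 1) o n.
Proof. rewrite /Vc; congr (_).1; apply: Kg_ext => k _; exact: d_ext. Qed.

Lemma P2K s n m : (Kg (d s) (o - n.+1%:Z) (1,1) (n + 3 + m)).1 =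
  (s * w (N - 1)) * (Vc (d 1) o n * Uc (d 1) o m - Uc (d 1) o n * Vc (d 1) o m)
  - (s * w (N - 1))^+2 * Uc (d 1) o n * Uc (d 1) o m.
Proof.
rewrite (@core _ _ _ (s * w (N - 1))).
- by rewrite !Uc2_ext !Vc2_ext.
- rewrite /d /cc /o (_ : - (- (N + 1) - 1) + 1 = N + 3); last by lia.
  rewrite (_ : - (- (N + 1) - 1) - 1 = N + 1); last by lia.
  rewrite /y ys2_N1 ys2_gt; last by lia.
  rewrite (_ : 2 * (N + 1) - (N + 3) = N - 1); last by lia.
  rewrite yb_ne; last by lia.
  by rewrite mulNr mulrC.
- rewrite /d /cc /o (_ : - - (N + 1) + 1 = N + 2); last by lia.
  rewrite (_ : - - (N + 1) - 1 = N); last by lia.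
  rewrite /y (ys2_le _ (lexx N)) yb_N mulr1 ys2_gt; last by lia.
  by rewrite (_ : 2 * (N + 1) - (N + 2) = N) ?yb_N //; lia.
- rewrite /d /cc /o (_ : - (- (N + 1) + 1) + 1 = N + 1); last by lia.
  rewrite (_ : - (- (N + 1) + 1) - 1 = N - 1); last by lia.
  rewrite /y ys2_N1 ys2_le; last by lia.
  by rewrite yb_ne //; lia.
- move=> i; rewrite /d /cc /o.
  rewrite (_ : - (- (N + 1) - i.+2%:Z) + 1 = N + i.+4%:Z); last by lia.
  rewrite (_ : - (- (N + 1) - i.+2%:Z) - 1 = N + i.+2%:Z); last by lia.
  rewrite (_ : - (- (N + 1) + i.+2%:Z) + 1 = N - i%:Z); last by lia.
  rewrite (_ : - (- (N + 1) + i.+2%:Z) - 1 = N - i.+2%:Z); last by lia.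
  rewrite /y (@ys2_gt _ (N + i.+4%:Z)); last by lia.
  rewrite (@ys2_gt _ (N + i.+2%:Z)); last by lia.
  rewrite (@ys2_le _ (N - i%:Z)); last by lia.
  rewrite (@ys2_le _ (N - i.+2%:Z)); last by lia.
  rewrite (_ : 2 * (N + 1) - (N + i.+4%:Z) = N - i.+2%:Z); last by lia.
  rewrite (_ : 2 * (N + 1) - (N + i.+2%:Z) = N - i%:Z); last by lia.
  by rewrite mulrNN mulrC.
Qed.

Lemma ysw s k : k <= N - 1 -> yspec2 N s w k = w k.
Proof. by move=> H; rewrite ys2_le ?yb_ne //; lia. Qed.

Lemma y1_le k : k <= N - 1 -> y 1 k = w k.
Proof. by move=> H; rewrite /y ys2_le ?yb_ne //; lia. Qed.

Lemma id2 n : w (N - 1) * Wr (d 1) o n = wprod (y 1) (N - n.+2%:Z) (n + 3 + n.+2).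
Proof.
elim: n => [|n IH].
  rewrite Wr0 /d /cc /o (_ : - (- (N + 1) + 2) + 1 = N); last by lia.
  rewrite (_ : - (- (N + 1) + 2) - 1 = N - 2%:Z); last by lia.
  rewrite 4!wprodSr wprod1.
  rewrite (_ : N - 2%:Z + 1%N%:Z = N - 1); last by lia.
  rewrite (_ : N - 2%:Z + 2%N%:Z = N); last by lia.
  rewrite (_ : N - 2%:Z + 3%N%:Z = N + 1); last by lia.
  rewrite (_ : N - 2%:Z + 4%N%:Z = N + 2); last by lia.
  rewrite /y ys2_N1 (ys2_le _ (lexx N)) yb_N (ys2_gt _ (lexx (N + 2))).
  rewrite (_ : 2 * (N + 1) - (N + 2) = N); last by lia.
  rewrite yb_N -!/(y 1 _) !y1_le; try lia.
  ring.
have E : d 1 (o + 2 + n.+1%:Z) = w (N - n.+1%:Z) * w (N - n.+3%:Z).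
  rewrite /d /cc /o.
  rewrite (_ : - (- (N + 1) + 2 + n.+1%:Z) + 1 = N - n.+1%:Z); last by lia.
  rewrite (_ : - (- (N + 1) + 2 + n.+1%:Z) - 1 = N - n.+3%:Z); last by lia.
  by rewrite !y1_le //; lia.
rewrite WrS E.
have -> : (n.+1 + 3 + n.+3 = (n + 3 + n.+2).+2)%N by lia.
rewrite wprodSl wprodSr.
rewrite (_ : N - n.+3%:Z + 1 = N - n.+2%:Z); last by lia.
rewrite (_ : N - n.+2%:Z + (n + 3 + n.+2)%N%:Z = N + n.+3%:Z); last by lia.
rewrite {3}/y (ys2_gt _ (_ : N + 2 <= N + n.+3%:Z)); last by lia.
rewrite (_ : 2 * (N + 1) - (N + n.+3%:Z) = N - n.+1%:Z); last by lia.
rewrite yb_ne; last by lia.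
rewrite y1_le; last by lia.
transitivity (- (w (N - n.+1%:Z) * w (N - n.+3%:Z)) * (w (N - 1) * Wr (d 1) o n)); first by ring.
rewrite IH; ring.
Qed.

Lemma wprod_ys2 s a m (i : 'I_m) : a + (i : nat)%:Z = N + 1 ->
  wprod (y s) a m = s * wprod (y 1) a m.
Proof.
move=> Hi; rewrite (@wprod_pull _ _ (y 1) _ _ i).
- by rewrite Hi /y ys2_N1.
- by move=> k; rewrite Hi => Hk; rewrite /y ys2_ne.
- by rewrite Hi /y ys2_N1.
Qed.

Lemma part2 k : Qladder (yspec2 N s w) (N - k%:Z) (2*k).+1 @[s --> (0:R)^'] --> (1:R).
Proof.
have HwN : w (N - 1) != 0 by apply: Hw.
case: k => [|[|n]].
- apply: (@lim_aux _ _ 1 (- w (N - 1)) 1); last by rewrite divr1.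
  move=> s Hs; rewrite Qladder_wprod Pladder_Kg K1 wprod1 subr0 /cc.
  rewrite ys2_N1 (ys2_le _ (lexx N)) yb_N ys2_le; last by lia.
  by rewrite yb_ne ?divr1 ?mulrN ?opprK //; lia.
- apply: (@lim_aux _ _ 1 0 1); last by rewrite divr1.
  move=> s Hs; rewrite Qladder_wprod Pladder_Kg K3 wprod3 /cc.
  rewrite (_ : N - 1%N%:Z + 1 + 1 = N + 1); last by lia.
  rewrite (_ : N - 1%N%:Z + 1 - 1 = N - 1); last by lia.
  rewrite (_ : N - 1%N%:Z + 1 = N); last by lia.
  rewrite (_ : N - 1%N%:Z + 2 + 1 = N + 2); last by lia.
  rewrite (_ : N - 1%N%:Z + 2 - 1 = N); last by lia.
  rewrite (_ : N - 1%N%:Z + 2 = N + 1); last by lia.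
  rewrite (_ : N - 1%N%:Z - 1 = N - 2%:Z); last by lia.
  rewrite (_ : N - 1%N%:Z = N - 1); last by lia.
  rewrite ys2_N1 (ys2_le _ (lexx N)) yb_N (ys2_gt _ (lexx (N + 2))).
  rewrite (_ : 2 * (N + 1) - (N + 2) = N); last by lia.
  rewrite yb_N !ysw; try lia.
  rewrite [X in X / _](_ : _ = w (N - 1) * 1 * s); last by ring.
  by rewrite divff ?mulr0 ?subr0 ?divr1 // mulf_neq0 // mulr1.
apply: (@lim_aux _ _ (w (N - 1) * Wr (d 1) o n)
   (w (N - 1) ^+ 2 * Uc (d 1) o n * Uc (d 1) o n.+2)
   (wprod (y 1) (N - n.+2%:Z) (n + 3 + n.+2))).
  move=> s Hs; rewrite Qladder_wprod Pladder_Kg.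
  have -> : ((2 * n.+2).+1 = n + 3 + n.+2)%N by lia.
  have -> : N - n.+2%:Z = (N + n.+2%:Z + 1) - (n + 3 + n.+2)%N%:Z by lia.
  rewrite Kg_rev /=.
  have -> : 1 - (N + n.+2%:Z + 1) = o - n.+1%:Z by rewrite /o; lia.
  rewrite -/(d s) P2K.
  have -> : N + n.+2%:Z + 1 - (n + 3 + n.+2)%N%:Z = N - n.+2%:Z by lia.
  have Hb : (n.+3 < n + 3 + n.+2)%N by lia.
  rewrite -/(y s) (@wprod_ys2 s _ _ (Ordinal Hb)); last by rewrite /=; lia.
  rewrite -[in RHS](ttdiv _ _ Hs); congr (_ / _); rewrite -Wr2; ring.
rewrite id2 divff //; apply: wprod_neq0; exact: ys2_nz.
Qed.

End Spec2.

Unset Implicit Arguments.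

Theorem lemma3 (R : realType) :
  (forall z : nat -> R, (forall n : nat, (2 <= n)%N -> z n != 0) ->
     (forall j : nat,
        (Qladder (yspec1 t z) (- (j : nat)%:Z) (2 * j).+2) @[t --> (0 : R)^']
          --> z j.+2) /\
     (forall k : nat,
        (Qladder (yspec1 t z) (1 - (k : nat)%:Z) (2 * k).+1) @[t --> (0 : R)^']
          --> (1 : R))) /\
  (forall (N : int) (w : int -> R), (forall k : int, k <= N - 1 -> w k != 0) ->
     forall k : nat,
       (Qladder (yspec2 N s w) (N - (k : nat)%:Z) (2 * k).+1) @[s --> (0 : R)^']
         --> (1 : R)).
Proof.
split.
  move=> z Hz; split; [exact: part1a | exact: part1b].
exact: part2.
Qed.
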